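(* Assume (A.2). Let $\chi\ge0$ be such that \[ M(y^\star_h(0),y^\star_h(T))+\frac{r^2(y^\star_h,u^\star_h)}{2\omega}\le M(y^\star(0),y^\star(T))+\chi . \] Then $\delta\le\chi$ and $\rho\le\sqrt2\cdot\sqrt{M(y^\star(0),y^\star(T))-C_{obj}+\chi}\cdot\sqrt{\omega}$.
   Context: Setting: $T>0$; $M:\mathbb{R}^{n_y}\times\mathbb{R}^{n_y}\to\mathbb{R}$, $b:\mathbb{R}^{n_y}\times\mathbb{R}^{n_y}\to\mathbb{R}^{n_b}$, $f_1:\mathbb{R}^{n_y}\times\mathbb{R}^{n_u}\times[0,T]\to\mathbb{R}^{n_y}$, $f_2:\mathbb{R}^{n_y}\times\mathbb{R}^{n_u}\times[0,T]\to\mathbb{R}^{n_c}$, bound functions $y_L\le y_R$ on $[0,T]$. The optimal control problem is: minimize $M(y(0),y(T))$ over pairs $(y,u)$ ($y\in L^\infty$ with $\dot y\in L^2$, $u\in L^\infty$) subject to $b(y(0),y(T))=0$, $\dot y=f_1(y,u,t)$, $f_2(y,u,t)=0$ a.e., and pointwise bounds $y_L\le y\le y_R$, $u_L\le u\le u_R$; $(y^\star,u^\star)$ is a local minimizer. With $f(\dot y,y,u,t)=(f_1(y,u,t)-\dot y,f_2(y,u,t))$, $r(y,u)=(\int_0^T\|f(\dot y,y,u,t)\|_2^2dt+\|b(y(0),y(T))\|_2^2)^{1/2}$. $\omega>0$ is a penalty parameter. $(y^\star_h,u^\star_h)$ is a continuous-in-$y$ piecewise polynomial pair (the numerical minimizer)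 satisfying $y_L(t)\le y^\star_h(t)\le y_R(t)$ at $t=0$ and $t=T$. $\delta=\max\{0,M(y^\star_h(0),y^\star_h(T))-M(y^\star(0),y^\star(T))\}$ and $\rho=r(y^\star_h,u^\star_h)$. (A.2): there is $C_{obj}$ with $M(a,a')\ge C_{obj}$ for all $a,a'\in\mathbb{R}^{n_y}$ with $y_L(0)\le a\le y_R(0)$, $y_L(T)\le a'\le y_R(T)$. *)

(* Defs.v *)
From HB Require Import structures.
From mathcomp Require Import all_boot all_order all_algebra.
From mathcomp Require Import all_classical all_reals all_analysis.
Set Implicit Arguments. Unset Strict Implicit. Unset Printing Implicit Defensive.
Import Order.TTheory GRing.Theory Num.Theory.
Local Open Scope ring_scope.
Local Open Scope classical_set_scope.

Section Defs.
Variable R : realType.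

Definition vle (n : nat) (a b : 'rV[R]_n) : Prop := forall i, a 0 i <= b 0 i.

Definition sqnorm (n : nat) (v : 'rV[R]_n) : R := \sum_(i < n) (v 0 i) ^+ 2.

Definition dtime (n : nat) (y : R -> 'rV[R]_n) (t : R) : 'rV[R]_n :=
  \row_i (fun s => y s 0 i)^`() t.

(* ||f(ydot,y,u,t)||_2^2 with f = (f1(y,u,t) - ydot, f2(y,u,t)) *)
Definition fres_sq (ny nu nc : nat)
  (f1 : 'rV[R]_ny -> 'rV[R]_nu -> R -> 'rV[R]_ny)
  (f2 : 'rV[R]_ny -> 'rV[R]_nu -> R -> 'rV[R]_nc)
  (y : R -> 'rV[R]_ny) (u : R -> 'rV[R]_nu) (t : R) : R :=
  sqnorm (f1 (y t) (u t) t - dtime y t) + sqnorm (f2 (y t) (u t) t).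

Definition resid (ny nu nb nc : nat) (T : R)
  (b : 'rV[R]_ny -> 'rV[R]_ny -> 'rV[R]_nb)
  (f1 : 'rV[R]_ny -> 'rV[R]_nu -> R -> 'rV[R]_ny)
  (f2 : 'rV[R]_ny -> 'rV[R]_nu -> R -> 'rV[R]_nc)
  (y : R -> 'rV[R]_ny) (u : R -> 'rV[R]_nu) : R :=
  Num.sqrt (Rintegral lebesgue_measure `[0, T] (fres_sq f1 f2 y u)
            + sqnorm (b (y 0) (y T))).

Definition delta_err (ny : nat) (T : R) (M : 'rV[R]_ny -> 'rV[R]_ny -> R)
  (yh ys : R -> 'rV[R]_ny) : R :=
  Num.max 0 (M (yh 0) (yh T) - M (ys 0) (ys T)).

End Defs.

(* Main.v *)
Require Import Defs.
From HB Require Import structures.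
From mathcomp Require Import all_boot all_order all_algebra.
From mathcomp Require Import all_classical all_reals all_analysis.
From mathcomp Require Import lra.
Import Order.TTheory GRing.Theory Num.Theory.
Local Open Scope ring_scope.

Theorem mainTheorem6 (R : realType) (ny nu nb nc : nat) (T : R)
  (M : 'rV[R]_ny -> 'rV[R]_ny -> R)
  (b : 'rV[R]_ny -> 'rV[R]_ny -> 'rV[R]_nb)
  (f1 : 'rV[R]_ny -> 'rV[R]_nu -> R -> 'rV[R]_ny)
  (f2 : 'rV[R]_ny -> 'rV[R]_nu -> R -> 'rV[R]_nc)
  (yL yR : R -> 'rV[R]_ny)
  (ystar : R -> 'rV[R]_ny) (ustar : R -> 'rV[R]_nu)
  (yh : R -> 'rV[R]_ny) (uh : R -> 'rV[R]_nu)
  (omega chi Cobj : R) :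
  0 < T ->
  0 < omega ->
  (* y_L <= y_h <= y_R at t = 0 and t = T *)
  vle (yL 0) (yh 0) -> vle (yh 0) (yR 0) ->
  vle (yL T) (yh T) -> vle (yh T) (yR T) ->
  (* (A.2) *)
  (forall a a' : 'rV[R]_ny, vle (yL 0) a -> vle a (yR 0) ->
     vle (yL T) a' -> vle a' (yR T) -> Cobj <= M a a') ->
  0 <= chi ->
  M (yh 0) (yh T) + (resid T b f1 f2 yh uh) ^+ 2 / (2 * omega)
    <= M (ystar 0) (ystar T) + chi ->
  delta_err T M yh ystar <= chi /\
  resid T b f1 f2 yh uh
    <= Num.sqrt 2 * Num.sqrt (M (ystar 0) (ystar T) - Cobj + chi) * Num.sqrt omega.
Proof.
move=> T0 om0 h1 h2 h3 h4 A2 chi0 H.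
have hC := A2 _ _ h1 h2 h3 h4.
move: hC H; rewrite /delta_err.
set r := resid _ _ _ _ _ _.
set m := M (yh 0) (yh T). set ms := M (ystar 0) (ystar T).
move=> hC H.
have r0 : 0 <= r by rewrite /r /resid sqrtr_ge0.
have q0 : 0 <= r ^+ 2 / (2 * omega).
  by apply: divr_ge0; [exact: sqr_ge0 | lra].
split.
  rewrite ge_max chi0 /=; lra.
have hK : r ^+ 2 <= (2 * (ms - Cobj + chi)) * omega.
  have hh : r ^+ 2 / (2 * omega) <= ms - Cobj + chi by lra.
  have om2 : 0 < 2 * omega by lra.
  move: hh; rewrite ler_pdivrMr // => hh; lra.
rewrite -sqrtrM; last lra.
rewrite -sqrtrM; last (apply: mulr_ge0; lra).
have -> : r = Num.sqrt (r ^+ 2) by rewrite sqrtr_sqr ger0_norm.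
exact: ler_wsqrtr.
Qed.
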